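(* Fix $t\in\{1,\dots,M\}$, corresponding to the pair $(i,j)$ with $C_t=C_{i,j}$, and let $z^*=(x^*,y^* )\in F(\mathcal{T}_t)$ with $|K_t(z^* )|=2$. Set $$r_t=\min\{g(x_i^*,x_j^*,w_i,w_j),\ g(y_i^*,y_j^*,h_i,h_j)\},\qquad g(a,b,c,d)=\frac{|(a-b)+(c-d)/2|}{\sqrt{2}}.$$ Then every $z\in B(z^*,r_t)$ satisfies $K_t(z)\subseteq K_t(z^* )$.
   Context: Fix reals $W,H>0$, integers $N\ge N_m\ge 2$, and widths $w_i>0$, heights $h_i>0$ for $1\le i\le N_m$. Points of $\mathbb{R}^{2N}$ are written $z=(x,y)$ with $x=(x_1,\dots,x_N)$, $y=(y_1,\dots,y_N)$. For $1\le i\le N_m$ let $B_i^x=\{z: 0\le x_i\le W-w_i\}$, $B_i^y=\{z: 0\le y_i\le H-h_i\}$; for $i\neq j$ let $B_{i,j}=B_i^x\cap B_i^y\cap B_j^x\cap B_j^y$, $O^x_{i,j}=\{z: x_i+w_i\le x_j\}$, $O^y_{i,j}=\{z: y_i+h_i\le y_j\}$. Define the closed convex sets $C_{i,j,\mathsf{L}}=O^x_{i,j}\cap B_{i,j}$, $C_{i,j,\mathsf{R}}=O^x_{j,i}\cap B_{i,j}$, $C_{i,j,\mathsf{B}}=O^y_{i,j}\cap B_{i,j}$, $C_{i,j,\mathsf{A}}=O^y_{j,i}\cap B_{i,j}$ (assumed nonempty) and $C_{i,j}=C_{i,j,\mathsf{L}}\cup C_{i,j,\mathsf{R}}\cup C_{i,j,\mathsf{B}}\cup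 C_{i,j,\mathsf{A}}$. Enumerate the pairs $1\le i<j\le N_m$ by $t=1,\dots,M$ and write $C_t=C_{i,j}$, $C_{t,k}=C_{i,j,k}$. With the Euclidean norm and $\mathrm{d}(z,C)=\inf_{c\in C}\|z-c\|$: $\mathcal{P}_t(z)=\{c\in C_t:\|z-c\|=\mathrm{d}(z,C_t)\}$, $P_{t,k}(z)$ is the unique nearest point of $C_{t,k}$ to $z$; for a fixed $\lambda\in(0,2)$, $\mathcal{T}_t(z)=\{z+\lambda(p-z):p\in\mathcal{P}_t(z)\}$, $F(\mathcal{T}_t)=\{z: z\in\mathcal{T}_t(z)\}$. Active indices: $K_t(z)=\{k\in\{\mathsf{L},\mathsf{R},\mathsf{B},\mathsf{A}\}: P_{t,k}(z)\in\mathcal{P}_t(z)\}$. $B(z,r)$ is the open Euclidean ball (empty if $r=0$). *)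

(* Defs.v *)
From HB Require Import structures.
From mathcomp Require Import all_boot all_order all_algebra.
From mathcomp Require Import all_classical all_reals.
Set Implicit Arguments. Unset Strict Implicit. Unset Printing Implicit Defensive.
Import Order.TTheory GRing.Theory Num.Theory.
Local Open Scope ring_scope.
Local Open Scope classical_set_scope.

(* A point z = (x, y) of R^{2N}, indices 0..N-1 (0-based). *)
Definition pt (R : realType) (N : nat) := (('I_N -> R) * ('I_N -> R))%type.

Definition eucl (R : realType) N (z c : pt R N) : R :=
  Num.sqrt (\sum_(k < N) (z.1 k - c.1 k) ^+ 2 + \sum_(k < N) (z.2 k - c.2 k) ^+ 2).

Definition Bx (R : realType) N (W : R) (w : 'I_N -> R) (i : 'I_N) : set (pt R N) :=
  [set z | 0 <= z.1 i /\ z.1 i <= W - w i].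
Definition By (R : realType) N (H : R) (h : 'I_N -> R) (i : 'I_N) : set (pt R N) :=
  [set z | 0 <= z.2 i /\ z.2 i <= H - h i].
Definition Bij (R : realType) N (W H : R) (w h : 'I_N -> R) (i j : 'I_N) :=
  Bx W w i `&` By H h i `&` Bx W w j `&` By H h j.
Definition Ox (R : realType) N (w : 'I_N -> R) (i j : 'I_N) : set (pt R N) :=
  [set z | z.1 i + w i <= z.1 j].
Definition Oy (R : realType) N (h : 'I_N -> R) (i j : 'I_N) : set (pt R N) :=
  [set z | z.2 i + h i <= z.2 j].

Inductive side := sL | sR | sB | sA.

Definition Cside (R : realType) N (W H : R) (w h : 'I_N -> R) (i j : 'I_N)
    (k : side) : set (pt R N) :=
  match k with
  | sL => Ox w i j `&` Bij W H w h i j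
  | sR => Ox w j i `&` Bij W H w h i j
  | sB => Oy h i j `&` Bij W H w h i j
  | sA => Oy h j i `&` Bij W H w h i j
  end.

Definition Cpair (R : realType) N (W H : R) (w h : 'I_N -> R) (i j : 'I_N)
  : set (pt R N) := [set z | exists k, Cside W H w h i j k z].

Definition distset (R : realType) N (z : pt R N) (C : set (pt R N)) : R :=
  inf [set eucl z c | c in C].

Definition nearest_set (R : realType) N (C : set (pt R N)) (z : pt R N)
  : set (pt R N) := [set c | C c /\ eucl z c = distset z C].

Definition is_proj (R : realType) N (C : set (pt R N)) (z p : pt R N) : Prop :=
  C p /\ forall c, C c -> eucl z p <= eucl z c.

Definition relax (R : realType) N (lam : R) (C : set (pt R N)) (z : pt R N)
  : set (pt R N) :=
  [set z' | exists p, nearest_set C z p /\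
     z' = ((fun k => z.1 k + lam * (p.1 k - z.1 k)),
           (fun k => z.2 k + lam * (p.2 k - z.2 k)))].

Definition fixpts (R : realType) N (lam : R) (C : set (pt R N)) : set (pt R N) :=
  [set z | relax lam C z z].

Definition active (R : realType) N (W H : R) (w h : 'I_N -> R) (i j : 'I_N)
    (z : pt R N) : set side :=
  [set k | exists p, is_proj (Cside W H w h i j k) z p /\
                     nearest_set (Cpair W H w h i j) z p].

Definition gfun (R : realType) (a b c d : R) : R :=
  `|(a - b) + (c - d) / 2| / Num.sqrt 2.

(* Main.v *)
Require Import Defs.
From HB Require Import structures.
From mathcomp Require Import all_boot all_order all_algebra.
From mathcomp Require Import all_classical all_reals.
From mathcomp Require Import ring lra.
Import Order.TTheory GRing.Theory Num.Theory.
Set Implicit Arguments. Unset Strict Implicit. Unset Printing Implicit Defensive.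
Local Open Scope ring_scope.
Local Open Scope classical_set_scope.
Definition kap (R : realFieldType) (W wi wj z1 z2 : R) : R :=
  if (z1 + z2 - wi) / 2 <= 0 then 0
  else if W - wi - wj <= (z1 + z2 - wi) / 2 then W - wi - wj
  else (z1 + z2 - wi) / 2.

Lemma eps_bound (R : realFieldType) (m a ep R0 D k : R) :
  0 < m -> 0 <= a -> 0 <= ep -> R0 = m + a -> a + ep <= k ->
  D ^+ 2 + k ^+ 2 < R0 ^+ 2 -> ep ^+ 2 < 4 * m * (R0 + D).
Proof.
move=> m0 a0 e0 eR ak H.
have k0 : 0 <= k by lra.
have kR : k < R0.
  rewrite ltNge; apply/negP => Hk.
  have : R0 ^+ 2 <= k ^+ 2 by rewrite !expr2; nra.
  have : 0 <= D ^+ 2 by apply: sqr_ge0.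
  lra.
have em : ep < m by lra.
rewrite ltNge; apply/negP => Hc.
set q := ep ^+ 2 / (4 * m).
have hq : q * (4 * m) = ep ^+ 2 by rewrite /q mulfVK //; lra.
have Dq : D <= q - R0.
  have : (q - R0) * (4 * m) = ep ^+ 2 - 4 * m * R0 by rewrite mulrBl hq; lra.
  move=> e.
  have : (D - (q - R0)) * (4 * m) <= 0 by rewrite mulrBl e; lra.
  rewrite pmulr_lle0 //; [lra | lra].
have qle : q * (4 * m) <= m * ep by rewrite hq expr2; apply: ler_pM; lra.
have q0 : 0 <= q by apply: divr_ge0; [apply: sqr_ge0 | lra].
have qR : q <= R0 / 4.
  have : q * (4 * m) <= (R0 / 4) * (4 * m).
    have -> : R0 / 4 * (4 * m) = R0 * m by field.
    nra.
  rewrite ler_pM2r //; lra.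
have D2 : (R0 - q) ^+ 2 <= D ^+ 2.
  rewrite !expr2; nra.
have k2 : (a + ep) ^+ 2 <= k ^+ 2 by rewrite !expr2; nra.
(* (R0 - q)^2 + (a+ep)^2 >= R0^2 *)
have key : 2 * R0 * q <= (a + ep) ^+ 2 + q ^+ 2.
  have h1 : 2 * R0 * q * (4 * m) = 2 * R0 * ep ^+ 2 by rewrite -mulrA hq.
  have h2 : 2 * R0 * ep ^+ 2 <= (a + ep) ^+ 2 * (4 * m).
    rewrite eR; nra.
  have : 2 * R0 * q * (4 * m) <= (a + ep) ^+ 2 * (4 * m) by lra.
  rewrite ler_pM2r; last lra.
  have : 0 <= q ^+ 2 by apply: sqr_ge0.
  lra.
have : R0 ^+ 2 <= D ^+ 2 + k ^+ 2.
  have : (R0 - q) ^+ 2 = R0 ^+ 2 - 2 * R0 * q + q ^+ 2 by ring.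
  lra.
lra.
Qed.

Lemma kap_range (R : realFieldType) (W wi wj z1 z2 : R) :
  0 <= W - wi - wj -> 0 <= kap W wi wj z1 z2 <= W - wi - wj.
Proof.
rewrite /kap => e0; case: ifP => H1; first lra.
case: ifP => H2; first lra.
move/negbT: H1; move/negbT: H2; rewrite -!ltNge => *; lra.
Qed.

Lemma core (R : realFieldType) (W wi wj s1 s2 z1 z2 p1 p2 : R) :
  0 < wi -> 0 < wj -> 0 <= s1 -> s2 <= W - wj -> s1 + wi <= s2 ->
  p2 + wj <= p1 ->
  2 * ((z1 - s1) ^+ 2 + (z2 - s2) ^+ 2) < (s1 - s2 + (wi - wj) / 2) ^+ 2 ->
  (z1 - kap W wi wj z1 z2) ^+ 2 + (z2 - (kap W wi wj z1 z2 + wi)) ^+ 2 <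
  (z1 - p1) ^+ 2 + (z2 - p2) ^+ 2.
Proof.
move=> wi0 wj0 s10 s2W sL pR Hs.
set u := z1 - z2; set v := z1 + z2; set us := s1 - s2; set vs := s1 + s2.
set c := (wj - wi) / 2; set m := (wi + wj) / 2.
set R0 := c - us.
have HD : (us - u) ^+ 2 + (vs - v) ^+ 2 < R0 ^+ 2.
  have -> : R0 ^+ 2 = (s1 - s2 + (wi - wj) / 2) ^+ 2 by rewrite /R0 /c /us; ring.
  have -> : (us - u) ^+ 2 + (vs - v) ^+ 2 = 2 * ((z1 - s1) ^+ 2 + (z2 - s2) ^+ 2)
    by rewrite /us /u /vs /v; ring.
  exact: Hs.
have R00 : 0 < R0 by rewrite /R0 /c /us; lra.
have uc : u < c.
  have h : (us - u) ^+ 2 < R0 ^+ 2.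
    have : 0 <= (vs - v) ^+ 2 by apply: sqr_ge0. lra.
  rewrite ltNge; apply/negP => Hc.
  have hh : R0 <= u - us by rewrite /R0; lra.
  have : R0 ^+ 2 <= (u - us) ^+ 2.
    rewrite !expr2; apply: ler_pM; lra.
  have -> : (u - us) ^+ 2 = (us - u) ^+ 2 by rewrite -sqrrN opprB.
  lra.
have step2 : (wj - u) ^+ 2 / 2 <= (z1 - p1) ^+ 2 + (z2 - p2) ^+ 2.
  have h1 : (u - (p1 - p2)) ^+ 2 / 2 <= (z1 - p1) ^+ 2 + (z2 - p2) ^+ 2.
    have -> : (z1 - p1) ^+ 2 + (z2 - p2) ^+ 2 =
       (u - (p1 - p2)) ^+ 2 / 2 + ((z1 - p1) + (z2 - p2)) ^+ 2 / 2
      by rewrite /u; field.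
    have : 0 <= ((z1 - p1) + (z2 - p2)) ^+ 2 / 2 by apply: divr_ge0; [apply: sqr_ge0|lra].
    lra.
  have : (wj - u) ^+ 2 <= (u - (p1 - p2)) ^+ 2.
    rewrite !expr2; rewrite /c in uc; nra.
  lra.
set k := kap W wi wj z1 z2.
set ep := v - wi - 2 * k.
have step3 : (z1 - k) ^+ 2 + (z2 - (k + wi)) ^+ 2 = ((u + wi) ^+ 2 + ep ^+ 2) / 2
  by rewrite /ep /u /v; field.
have id4 : (wj - u) ^+ 2 - (u + wi) ^+ 2 = 4 * m * (c - u) by rewrite /m /c; field.
suff : ep ^+ 2 < 4 * m * (c - u) by lra.
have m0 : 0 < m by rewrite /m; lra.
have hcu : c - u = R0 + (us - u) by rewrite /R0; ring.
rewrite /ep /k /kap -/v.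
case: ifP => H1.
  rewrite mulr0 subr0 -sqrrN opprB hcu.
  have a0 : 0 <= - us - wi by rewrite /us; lra.
  have e0 : 0 <= wi - v by lra.
  have eR : R0 = m + (- us - wi) by rewrite /R0 /c /m; field.
  have ak : - us - wi + (wi - v) <= vs - v by rewrite /us /vs; lra.
  exact: (eps_bound m0 a0 e0 eR ak HD).
case: ifP => H2.
  rewrite hcu.
  move/negbT: H1; rewrite -ltNge => H1.
  have a0 : 0 <= - us - wi by rewrite /us; lra.
  have e0 : 0 <= v - wi - 2 * (W - wi - wj) by lra.
  have eR : R0 = m + (- us - wi) by rewrite /R0 /c /m; field.
  have ak : - us - wi + (v - wi - 2 * (W - wi - wj)) <= v - vs by rewrite /us /vs; lra.
  have HD' : (us - u) ^+ 2 + (v - vs) ^+ 2 < R0 ^+ 2.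
    have -> : (v - vs) ^+ 2 = (vs - v) ^+ 2 by rewrite -sqrrN opprB.
    exact: HD.
  exact: (eps_bound m0 a0 e0 eR ak HD').
have -> : v - wi - 2 * ((v - wi) / 2) = 0 by field.
rewrite expr0n /=.
have : 0 < c - u by lra.
move=> h; apply: mulr_gt0 => //; lra.
Qed.

Section Aux.
Variable R : realType.
Variable N : nat.

Definition upd (pf : 'I_N -> R) (i j : 'I_N) (a b : R) : 'I_N -> R :=
  fun k => if k == i then a else if k == j then b else pf k.

Lemma sum2 (f : 'I_N -> R) (i j : 'I_N) : i != j ->
  \sum_(k < N) f k = f i + f j + \sum_(k < N | (k != i) && (k != j)) f k.
Proof.
move=> ij; rewrite (bigD1 i) //= (bigD1 j) //=; last by rewrite eq_sym.
by rewrite addrA.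
Qed.

Lemma sum_upd (zf pf : 'I_N -> R) (i j : 'I_N) (a b : R) : i != j ->
  (zf i - a) ^+ 2 + (zf j - b) ^+ 2 < (zf i - pf i) ^+ 2 + (zf j - pf j) ^+ 2 ->
  \sum_(k < N) (zf k - upd pf i j a b k) ^+ 2 < \sum_(k < N) (zf k - pf k) ^+ 2.
Proof.
move=> ij H.
rewrite (sum2 (fun k => (zf k - upd pf i j a b k) ^+ 2) ij).
rewrite (sum2 (fun k => (zf k - pf k) ^+ 2) ij).
have ji : (j == i) = false by apply/negbTE; rewrite eq_sym.
rewrite /upd eqxx ji eqxx.
have -> : \sum_(k < N | (k != i) && (k != j))
    (zf k - (if k == i then a else if k == j then b else pf k)) ^+ 2 =
  \sum_(k < N | (k != i) && (k != j)) (zf k - pf k) ^+ 2.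
  by apply: eq_bigr => k /andP[ki kj]; rewrite (negbTE ki) (negbTE kj).
lra.
Qed.

Lemma xcase (W : R) (w : 'I_N -> R) (i j : 'I_N) (zf sf pf : 'I_N -> R) :
  i != j -> 0 < w i -> 0 < w j -> 0 <= sf i -> sf j <= W - w j ->
  sf i + w i <= sf j -> pf j + w j <= pf i ->
  2 * ((zf i - sf i) ^+ 2 + (zf j - sf j) ^+ 2) < (sf i - sf j + (w i - w j) / 2) ^+ 2 ->
  exists cf : 'I_N -> R, [/\ cf i + w i <= cf j, 0 <= cf i <= W - w i,
     0 <= cf j <= W - w j &
     \sum_(k < N) (zf k - cf k) ^+ 2 < \sum_(k < N) (zf k - pf k) ^+ 2].
Proof.
move=> ij wi0 wj0 s10 s2W sL pR Hs.
set ka := kap W (w i) (w j) (zf i) (zf j).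
have e0 : 0 <= W - w i - w j by lra.
have /andP[k0 k1] := kap_range (zf i) (zf j) e0.
rewrite -/ka in k0 k1.
have ji : (j == i) = false by apply/negbTE; rewrite eq_sym.
exists (upd pf i j ka (ka + w i)); rewrite /upd eqxx ji eqxx; split.
- lra.
- apply/andP; split; lra.
- apply/andP; split; lra.
have := sum_upd (zf:=zf) (pf:=pf) (a:=ka) (b:=ka + w i) ij.
rewrite /upd; apply.
exact: (core wi0 wj0 s10 s2W sL pR Hs).
Qed.

Lemma scond (zf sf : 'I_N -> R) (S2 d : R) (i j : 'I_N) : i != j -> 0 <= S2 ->
  Num.sqrt (\sum_(k < N) (zf k - sf k) ^+ 2 + S2) < `|d| / Num.sqrt 2 ->
  2 * ((zf i - sf i) ^+ 2 + (zf j - sf j) ^+ 2) < d ^+ 2.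
Proof.
move=> ij S20 H.
set S := \sum_(k < N) (zf k - sf k) ^+ 2.
have Srest : 0 <= \sum_(k < N | (k != i) && (k != j)) (zf k - sf k) ^+ 2.
  by apply: sumr_ge0 => k _; apply: sqr_ge0.
have SS : S = (zf i - sf i) ^+ 2 + (zf j - sf j) ^+ 2 +
   \sum_(k < N | (k != i) && (k != j)) (zf k - sf k) ^+ 2.
  by rewrite /S (sum2 (fun k => (zf k - sf k) ^+ 2) ij).
have S0 : 0 <= S + S2.
  have : 0 <= (zf i - sf i) ^+ 2 by apply: sqr_ge0.
  have : 0 <= (zf j - sf j) ^+ 2 by apply: sqr_ge0.
  lra.
have x0 : 0 <= Num.sqrt (S + S2) by apply: sqrtr_ge0.
have sq : Num.sqrt (S + S2) ^+ 2 < (`|d| / Num.sqrt 2) ^+ 2.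
  rewrite !expr2; apply: ltr_pM => //.
have e1 : Num.sqrt (S + S2) ^+ 2 = S + S2 by rewrite sqr_sqrtr.
have e2 : (`|d| / Num.sqrt 2) ^+ 2 = d ^+ 2 / 2.
  by rewrite expr_div_n sqr_sqrtr // real_normK // num_real.
rewrite e1 e2 in sq.
lra.
Qed.

Lemma eucl_self (z : pt R N) : eucl z z = 0.
Proof.
rewrite /eucl !big1 ?addr0 ?sqrtr0 // => k _; by rewrite subrr expr0n.
Qed.

Lemma eucl0_eq (z p : pt R N) : eucl z p = 0 -> p = z.
Proof.
rewrite /eucl => /eqP; rewrite sqrtr_eq0 => H.
have A0 : 0 <= \sum_(k < N) (z.1 k - p.1 k) ^+ 2
  by apply: sumr_ge0 => k _; apply: sqr_ge0.
have B0 : 0 <= \sum_(k < N) (z.2 k - p.2 k) ^+ 2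
  by apply: sumr_ge0 => k _; apply: sqr_ge0.
have A : \sum_(k < N) (z.1 k - p.1 k) ^+ 2 = 0 by lra.
have B : \sum_(k < N) (z.2 k - p.2 k) ^+ 2 = 0 by lra.
have hA := psumr_eq0P (fun k _ => sqr_ge0 (z.1 k - p.1 k)) A.
have hB := psumr_eq0P (fun k _ => sqr_ge0 (z.2 k - p.2 k)) B.
case: z p hA hB {A B A0 B0 H} => z1 z2 [p1 p2] /= hA hB.
congr pair; apply: boolp.funext => k.
  by have /eqP := hA k isT; rewrite sqrf_eq0 subr_eq0 => /eqP ->.
by have /eqP := hB k isT; rewrite sqrf_eq0 subr_eq0 => /eqP ->.
Qed.

Lemma distset_le (z c : pt R N) (C : set (pt R N)) : C c -> distset z C <= eucl z c.
Proof.
move=> Cc; apply: ge_inf; last by exists c.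
by exists 0 => _ [c' _ <-]; apply: sqrtr_ge0.
Qed.

Lemma distset_ge0 (z : pt R N) (C : set (pt R N)) : C !=set0 -> 0 <= distset z C.
Proof.
move=> [c Cc]; apply: lb_le_inf; first by exists (eucl z c), c.
by move=> _ [c' _ <-]; apply: sqrtr_ge0.
Qed.

End Aux.

Definition opp (k : side) : side :=
  match k with sL => sR | sR => sL | sB => sA | sA => sB end.

Lemma oppside (P : side -> Prop) (k k1 k2 : side) :
  (P sL -> P sR -> False) -> (P sB -> P sA -> False) ->
  P k1 -> P k2 -> k <> k1 -> k <> k2 -> k1 <> k2 -> P (opp k).
Proof.
move=> eLR eBA.
case: k; case: k1; case: k2 => /= H1 H2 n1 n2 n3;
  first [ done | by exfalso; apply: n1 | by exfalso; apply: n2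
        | by exfalso; apply: n3
        | by case: (eLR H1 H2) | by case: (eLR H2 H1)
        | by case: (eBA H1 H2) | by case: (eBA H2 H1) ].
Qed.
Theorem mainTheorem6 (R : realType) (W H : R) (N Nm : nat)
    (w h : 'I_N -> R) (lam : R) (i j : 'I_N) :
  0 < W -> 0 < H -> (2 <= Nm)%N -> (Nm <= N)%N ->
  (forall k : 'I_N, (k < Nm)%N -> 0 < w k /\ 0 < h k) ->
  (i < j)%N -> (j < Nm)%N ->
  (forall k : side, Cside W H w h i j k !=set0) ->
  0 < lam < 2 ->
  forall zs : pt R N,
    fixpts lam (Cpair W H w h i j) zs ->
    (exists k1 k2 : side, k1 <> k2 /\
       forall k, active W H w h i j zs k <-> (k = k1 \/ k = k2)) ->
    let r := Num.min (gfun (zs.1 i) (zs.1 j) (w i) (w j))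
                     (gfun (zs.2 i) (zs.2 j) (h i) (h j)) in
    forall z : pt R N, eucl z zs < r ->
      active W H w h i j z `<=` active W H w h i j zs.
Proof.
move=> W0 H0 _ _ Hwh ij jNm Cne lam02 zs Hfix [k1 [k2 [n12 Hk]]] r z Hz k Hkz.
have nij : i != j by apply/eqP => e; move: ij; rewrite e ltnn.
have [wi0 hi0] := Hwh i (ltn_trans ij jNm).
have [wj0 hj0] := Hwh j jNm.
have lam0 : lam != 0 by apply/eqP => e; move: lam02; rewrite e ltxx.
have Czs : Cpair W H w h i j zs.
  case: Hfix => p [[Cp _] E].
  suff -> : zs = p by [].
  have e1 k0 : zs.1 k0 = zs.1 k0 + lam * (p.1 k0 - zs.1 k0).
    by have := congr1 (fun q : pt R N => q.1 k0) E.
  have e2 k0 : zs.2 k0 = zs.2 k0 + lam * (p.2 k0 - zs.2 k0).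
    by have := congr1 (fun q : pt R N => q.2 k0) E.
  apply: injective_projections; apply: boolp.funext => k0.
    have := e1 k0; move/eqP; rewrite eq_sym -subr_eq0 addrC addKr mulf_eq0 (negbTE lam0) /=.
    by rewrite subr_eq0 => /eqP ->.
  have := e2 k0; move/eqP; rewrite eq_sym -subr_eq0 addrC addKr mulf_eq0 (negbTE lam0) /=.
  by rewrite subr_eq0 => /eqP ->.
have d0 : distset zs (Cpair W H w h i j) = 0.
  have := distset_le zs Czs; rewrite eucl_self.
  have := distset_ge0 zs (ex_intro _ zs Czs : Cpair W H w h i j !=set0).
  lra.
have actC k0 : active W H w h i j zs k0 -> Cside W H w h i j k0 zs.
  case=> p [[Cp _] [_ ep]].
  by rewrite d0 in ep; rewrite -(eucl0_eq ep).
case: (boolp.pselect (active W H w h i j zs k)) => // nk.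
exfalso.
have A1 : active W H w h i j zs k1 by apply/Hk; left.
have A2 : active W H w h i j zs k2 by apply/Hk; right.
have nk1 : k <> k1 by move=> e; apply: nk; apply/Hk; left.
have nk2 : k <> k2 by move=> e; apply: nk; apply/Hk; right.
have eLR : Cside W H w h i j sL zs -> Cside W H w h i j sR zs -> False.
  by case=> /= h1 _ [/= h2 _]; rewrite /Ox /= in h1 h2; lra.
have eBA : Cside W H w h i j sB zs -> Cside W H w h i j sA zs -> False.
  by case=> /= h1 _ [/= h2 _]; rewrite /Oy /= in h1 h2; lra.
have Copp := oppside (P := fun k0 => Cside W H w h i j k0 zs) eLR eBA (actC _ A1) (actC _ A2) nk1 nk2 n12.
case: Hkz => p [[Cp _] [_ ep]].
have S10 : 0 <= \sum_(k0 < N) (z.1 k0 - zs.1 k0) ^+ 2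
  by apply: sumr_ge0 => k0 _; apply: sqr_ge0.
have S20 : 0 <= \sum_(k0 < N) (z.2 k0 - zs.2 k0) ^+ 2
  by apply: sumr_ge0 => k0 _; apply: sqr_ge0.
have /andP[Hx Hy] : (eucl z zs < gfun (zs.1 i) (zs.1 j) (w i) (w j)) &&
                    (eucl z zs < gfun (zs.2 i) (zs.2 j) (h i) (h j)).
  by rewrite -lt_min.
rewrite /eucl /gfun in Hx Hy.
have Sx := scond nij S20 Hx.
rewrite addrC in Hy.
have Sy := scond nij S10 Hy.
have T10 : 0 <= \sum_(k0 < N) (z.1 k0 - p.1 k0) ^+ 2
  by apply: sumr_ge0 => k0 _; apply: sqr_ge0.
have T20 : 0 <= \sum_(k0 < N) (z.2 k0 - p.2 k0) ^+ 2
  by apply: sumr_ge0 => k0 _; apply: sqr_ge0.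
have fin (c : pt R N) : Cpair W H w h i j c ->
    \sum_(k0 < N) (z.1 k0 - c.1 k0) ^+ 2 + \sum_(k0 < N) (z.2 k0 - c.2 k0) ^+ 2 <
    \sum_(k0 < N) (z.1 k0 - p.1 k0) ^+ 2 + \sum_(k0 < N) (z.2 k0 - p.2 k0) ^+ 2 -> False.
  move=> Cc Hlt.
  have := distset_le z Cc; rewrite -ep /eucl.
  have c1 : 0 <= \sum_(k0 < N) (z.1 k0 - c.1 k0) ^+ 2
    by apply: sumr_ge0 => k0 _; apply: sqr_ge0.
  have c2 : 0 <= \sum_(k0 < N) (z.2 k0 - c.2 k0) ^+ 2
    by apply: sumr_ge0 => k0 _; apply: sqr_ge0.
  rewrite ler_sqrt; last lra.
  lra.
have nji : j != i by rewrite eq_sym.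
clear nk nk1 nk2 A1 A2 actC Hk.
move: Cp Copp; case: k => /= Cp Copp.
-
  case: Copp => /= oz [[[[bi1 bi2] [ci1 ci2]] [bj1 bj2]] [cj1 cj2]].
  case: Cp => /= op [[[[pi1 pi2] [qi1 qi2]] [pj1 pj2]] [qj1 qj2]].
  rewrite /Ox /= in oz op.
  have Sx' : 2 * ((z.1 j - zs.1 j) ^+ 2 + (z.1 i - zs.1 i) ^+ 2) <
     (zs.1 j - zs.1 i + (w j - w i) / 2) ^+ 2.
    have -> : (zs.1 j - zs.1 i + (w j - w i) / 2) ^+ 2 =
      (zs.1 i - zs.1 j + (w i - w j) / 2) ^+ 2 by ring.
    lra.
  have [cf [c1 c2 c3 c4]] := xcase nji wj0 wi0 bj1 bi2 oz op Sx'.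
  apply: (fin (cf, p.2)) => /=; last lra.
  exists sR; split => /=; first by rewrite /Ox /=.
  move/andP: c2 => [? ?]; move/andP: c3 => [? ?].
  by split; [split; [split|] |]; split.
-
  case: Copp => /= oz [[[[bi1 bi2] [ci1 ci2]] [bj1 bj2]] [cj1 cj2]].
  case: Cp => /= op [[[[pi1 pi2] [qi1 qi2]] [pj1 pj2]] [qj1 qj2]].
  rewrite /Ox /= in oz op.
  have [cf [c1 c2 c3 c4]] := xcase nij wi0 wj0 bi1 bj2 oz op Sx.
  apply: (fin (cf, p.2)) => /=; last lra.
  exists sL; split => /=; first by rewrite /Ox /=.
  move/andP: c2 => [? ?]; move/andP: c3 => [? ?].
  by split; [split; [split|] |]; split.
-
  case: Copp => /= oz [[[[bi1 bi2] [ci1 ci2]] [bj1 bj2]] [cj1 cj2]].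
  case: Cp => /= op [[[[pi1 pi2] [qi1 qi2]] [pj1 pj2]] [qj1 qj2]].
  rewrite /Oy /= in oz op.
  have Sy' : 2 * ((z.2 j - zs.2 j) ^+ 2 + (z.2 i - zs.2 i) ^+ 2) <
     (zs.2 j - zs.2 i + (h j - h i) / 2) ^+ 2.
    have -> : (zs.2 j - zs.2 i + (h j - h i) / 2) ^+ 2 =
      (zs.2 i - zs.2 j + (h i - h j) / 2) ^+ 2 by ring.
    lra.
  have [cf [c1 c2 c3 c4]] := xcase nji hj0 hi0 cj1 ci2 oz op Sy'.
  apply: (fin (p.1, cf)) => /=; last lra.
  exists sA; split => /=; first by rewrite /Oy /=.
  move/andP: c2 => [? ?]; move/andP: c3 => [? ?].
  by split; [split; [split|] |]; split.
-
  case: Copp => /= oz [[[[bi1 bi2] [ci1 ci2]] [bj1 bj2]] [cj1 cj2]].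
  case: Cp => /= op [[[[pi1 pi2] [qi1 qi2]] [pj1 pj2]] [qj1 qj2]].
  rewrite /Oy /= in oz op.
  have [cf [c1 c2 c3 c4]] := xcase nij hi0 hj0 ci1 cj2 oz op Sy.
  apply: (fin (p.1, cf)) => /=; last lra.
  exists sB; split => /=; first by rewrite /Oy /=.
  move/andP: c2 => [? ?]; move/andP: c3 => [? ?].
  by split; [split; [split|] |]; split.
Qed.
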